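(* Let $X$ be a nonempty set and let $Z\subset\{0,1\}^X$ be a nonempty finite linearly dependent set of nonzero vectors, and put $p=|Z|-1$. Then there exist integers $(\Delta_w)_{w\in Z}$, not all zero, such that $|\Delta_w|\le a(p)$ for each $w\in Z$ and $\sum_{w\in Z}\Delta_w\, w=0$.
   Context: $\{0,1\}^X\subset\mathbb{R}^X$ is the set of functions $X\to\{0,1\}$, viewed as vectors in the real vector space $\mathbb{R}^X$. For a positive integer $p$, $a(p)$ denotes the maximum determinant of a $p\times p$ matrix all of whose entries are $0$ or $1$. *)

(* Defs.v *)
From mathcomp Require Import all_boot all_order all_algebra.
From mathcomp Require Import reals.
Set Implicit Arguments. Unset Strict Implicit. Unset Printing Implicit Defensive.
Import Order.TTheory GRing.Theory Num.Theory.
Local Open Scope ring_scope.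

Definition mx01 (p : nat) (A : 'M[bool]_p) : 'M[int]_p :=
  map_mx (fun b : bool => (b%:R : int)) A.

(* a(p): maximum determinant of a p x p matrix with all entries 0 or 1.
   The fold starts at 0, which is harmless: for p >= 1 the zero matrix has
   determinant 0, and for p = 0 the maximum is det of the empty matrix = 1. *)
Definition amax (p : nat) : int :=
  \big[Num.max/0]_(A : 'M[bool]_p) \det (mx01 A).

(* Main.v *)
Require Import Defs.
From mathcomp Require Import all_boot all_order all_algebra.
From mathcomp Require Import reals.
Import Order.TTheory GRing.Theory Num.Theory.
Local Open Scope ring_scope.
From mathcomp Require Import boolp.
Set Implicit Arguments. Unset Strict Implicit. Unset Printing Implicit Defensive.
Local Open Scope ring_scope.

Definition is01 (r : nat) (M : 'M[int]_r) := forall i j, M i j = 0 \/ M i j = 1.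

Lemma det01_le r (M : 'M[int]_r) : is01 M -> \det M <= amax r.
Proof.
move=> H.
have -> : M = mx01 (map_mx (fun z : int => z == 1) M).
  apply/matrixP => i j; rewrite !mxE; by case: (H i j) => ->.
exact: (le_bigmax _ (fun A : 'M[bool]_r => \det (mx01 A))).
Qed.

Lemma det01_abs r (M : 'M[int]_r) : is01 M -> `|\det M| <= amax r.
Proof.
move=> H; have [d0|d0] := lerP 0 (\det M).
  by rewrite ger0_norm //; apply: det01_le.
rewrite ltr0_norm //.
case: r M H d0 => [|[|r]] M H d0.
- by rewrite det_mx00 in d0.
- by rewrite det_mx11 in d0; case: (H 0 0) d0 => ->.
have H' : is01 (xrow 0 1 M) by move=> i j; rewrite /xrow /row_perm mxE; exact: H.
have := det01_le H'.
rewrite xrowE det_mulmx /tperm_mx det_perm perm.odd_tperm /= expr1 mulN1r; apply.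
Qed.

Lemma amax_ge0 r : 0 <= amax r.
Proof.
rewrite /amax; elim/big_rec: _ => // A x _ hx.
by rewrite le_max hx orbT.
Qed.

Lemma mx01_is01 r (A : 'M[bool]_r) : is01 (mx01 A).
Proof. by move=> i j; rewrite mxE; case: (A i j); [right|left]. Qed.

Lemma amax_mono r : amax r <= amax r.+1.
Proof.
rewrite {1}/amax; apply: bigmax_le; first exact: amax_ge0.
move=> A _.
pose B : 'M[int]_(1 + r) := block_mx 1 0 0 (mx01 A).
have HB : is01 B.
  move=> i j.
  have E k : k = unsplit (split k) by rewrite splitK.
  rewrite /B [i]E [j]E; case: (split i) => a; case: (split j) => b /=.
  - rewrite block_mxEul mxE; case: (a == b); [right|left]; done.
  - by rewrite block_mxEur mxE; left.
  - by rewrite block_mxEdl mxE; left.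
  - by rewrite block_mxEdr; apply: mx01_is01.
have := det01_le HB.
by rewrite /B det_ublock det1 mul1r.
Qed.

Lemma amax_monoW r s : (r <= s)%N -> amax r <= amax s.
Proof.
elim: s => [|s IH]; first by rewrite leqn0 => /eqP ->.
rewrite leq_eqVlt => /orP [/eqP -> //|]; rewrite ltnS => /IH h.
exact: le_trans h (amax_mono s).
Qed.
Definition repcol (R : Type) r (S : 'M[R]_r) (b : 'I_r -> R) (k : 'I_r) : 'M[R]_r :=
  \matrix_(i', l) if l == k then b i' else S i' l.

Lemma cramer_id (R : comNzRingType) r (S : 'M[R]_r) (b : 'I_r -> R) i :
  \sum_k S i k * \det (repcol S b k) = \det S * b i.
Proof.
have E k : \det (repcol S b k) = \sum_i' b i' * \adj S k i'.
  rewrite (expand_det_col _ k); apply: eq_bigr => i' _.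
  rewrite /repcol mxE eqxx; congr (_ * _).
  rewrite mxE /cofactor; congr (_ * \det _).
  by apply/matrixP => a c; rewrite !mxE eq_sym (negbTE (neq_lift _ _)).
under eq_bigr => k _ do rewrite E big_distrr.
rewrite exchange_big /=.
transitivity (\sum_i' b i' * (S *m \adj S) i i').
  apply: eq_bigr => i' _; rewrite mxE big_distrr; apply: eq_bigr => k _.
  by rewrite mulrCA.
rewrite mul_mx_adj (bigD1 i) //= big1 ?addr0.
  by rewrite mxE eqxx mulr1n mulrC.
by move=> i' ne; rewrite mxE eq_sym (negbTE ne) mulr0n mulr0.
Qed.

Section Kern.
Variables (R : comNzRingType) (r n : nat) (M : 'I_r -> 'I_n -> R).
Variables (g : 'I_r -> 'I_n) (g_inj : injective g) (j : 'I_n) (hj : j \notin codom g).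

Definition Smx : 'M[R]_r := \matrix_(i, k) M i (g k).
Definition bv (i : 'I_r) := M i j.
Definition Dv (l : 'I_n) : R :=
  if l == j then - \det Smx else
  if [pick k | g k == l] is Some k then \det (repcol Smx bv k) else 0.

Lemma Dv_g k : Dv (g k) = \det (repcol Smx bv k).
Proof.
rewrite /Dv.
have -> : (g k == j) = false.
  by apply/negbTE; apply: contra hj => /eqP <-; apply: codom_f.
case: pickP => [k' /eqP /g_inj -> //|/(_ k)]; by rewrite eqxx.
Qed.

Lemma Dv_out l : l != j -> l \notin [set g k | k in setT] -> Dv l = 0.
Proof.
move=> hl hi; rewrite /Dv (negbTE hl).
case: pickP => // k /eqP hk; case/negP: hi; rewrite -hk; exact: imset_f.
Qed.

Lemma kern i : \sum_l M i l * Dv l = 0.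
Proof.
rewrite (bigD1 j) //= (bigID (mem [set g k | k in setT])) /=.
rewrite [X in _ + (_ + X)]big1; last first.
  by move=> l /andP [hl hi]; rewrite Dv_out // mulr0.
rewrite addr0.
have -> : \sum_(l | (l != j) && (l \in [set g k | k in setT])) M i l * Dv l
        = \sum_(l in [set g k | k in setT]) M i l * Dv l.
  apply: eq_bigl => l; case hi: (l \in _); rewrite ?andbF ?andbT //.
  case/imsetP: hi => k _ ->; apply/negP => /eqP e; case/negP: hj.
  by rewrite -e codom_f.
rewrite big_imset /=; last by move=> a b _ _; apply: g_inj.
under eq_bigr => k _ do rewrite Dv_g.
rewrite (eq_bigr (fun k => Smx i k * \det (repcol Smx bv k))); last first.
  by move=> k _; rewrite mxE.
under eq_bigl => k do rewrite in_setT.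
by rewrite cramer_id /Dv eqxx /bv mulrN mulrC addNr.
Qed.
End Kern.

Lemma core (R : realType) m n (A : 'M[int]_(m,n))
  (H01 : forall p i, A p i = 0 \/ A p i = 1) (c : 'cV[R]_n) (cnz : c != 0)
  (Ac : map_mx intr A *m c = 0) :
  exists D : 'I_n -> int, (exists i, D i != 0) /\
    (forall i, `|D i| <= amax n.-1) /\ (forall p, \sum_i A p i * D i = 0).
Proof.
pose AR : 'M[R]_(m,n) := map_mx intr A.
change (AR *m c = 0) in Ac.
have rk : (\rank AR < n)%N.
  have h1 : (c^T <= kermx AR^T)%MS by apply/sub_kermxP; rewrite -trmx_mul Ac trmx0.
  have := mxrankS h1; rewrite mxrank_ker [\rank AR^T]mxrank_tr rank_rV.
  have -> : (c^T != 0) by apply: contra cnz => /eqP e; rewrite -[c]trmxK e trmx0.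
  by rewrite subn_gt0.
set f := maxrankfun AR.
set A1 := rowsub f AR.
have rA1 : \rank A1 = \rank AR by rewrite /A1 (eq_maxrowsub AR).
have hfull : row_full A1^T by rewrite /row_full mxrank_tr rA1.
set g := fullrankfun hfull.
have g_inj : injective g := fullrankfun_inj (rkA := hfull).
have unitST := fullrowsub_unit hfull.
have [j hj] : exists j, j \notin codom g.
  case: (pickP (fun j => j \notin codom g)) => [j hj|h]; first by exists j.
  have : (#|'I_n| <= #|codom g|)%N.
    by apply: subset_leq_card; apply/subsetP => x _; move: (h x) => /= /negbFE.
  by rewrite card_codom // !card_ord leqNgt rk.
pose M i l := A (f i) l.
pose D := Dv M g j.
have hS : map_mx intr (Smx M g) = (rowsub g A1^T)^T.
  by apply/matrixP => i k; rewrite !mxE.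
have dS : \det (Smx M g) != 0.
  have : (\det (rowsub g A1^T) : R) != 0 by rewrite -unitfE -unitmxE.
  rewrite -det_tr -hS det_map_mx; apply: contra => /eqP ->; by rewrite rmorph0.
have rn : (\rank AR <= n.-1)%N by rewrite -ltnS prednK // (leq_ltn_trans _ rk).
exists D; split; first by exists j; rewrite /D /Dv eqxx oppr_eq0.
split.
  move=> l; rewrite /D /Dv; case: (l == j).
    rewrite normrN; apply: le_trans (amax_monoW rn); apply: det01_abs.
    by move=> i k; rewrite mxE; apply: H01.
  case: pickP => [k _|_]; last by rewrite normr0 amax_ge0.
  apply: le_trans (amax_monoW rn); apply: det01_abs.
  by move=> i k0; rewrite !mxE; case: (k0 == _); rewrite /bv ?mxE; apply: H01.
pose DR : 'cV[R]_n := \col_l (D l)%:~R.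
have K1 : A1 *m DR = 0.
  apply/matrixP => i z; rewrite !mxE.
  have := @kern _ _ _ M _ g_inj _ hj i; move/(congr1 (intr : int -> R)); rewrite rmorph_sum rmorph0 => e; apply: etrans e.
  by apply: eq_bigr => l _; rewrite !mxE rmorphM.
have : (AR <= A1)%MS by rewrite /A1 (eq_maxrowsub AR).
case/submxP => W hW.
have K2 : AR *m DR = 0 by rewrite hW -mulmxA K1 mulmx0.
move=> p; apply: (@intr_inj R); rewrite rmorph_sum rmorph0.
have := congr1 (fun X : 'M[R]_(m,1) => X p 0) K2; rewrite !mxE => e; apply: etrans e; apply: esym.
by apply: eq_bigr => l _; rewrite !mxE rmorphM.
Qed.

Theorem lemma2 (R : realType) (X : Type) (x0 : X) (n : nat)
    (v : 'I_n -> X -> bool)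
    (v_inj : injective v)
    (Zne : (0 < n)%N)
    (v_nz : forall i : 'I_n, exists x : X, v i x = true)
    (Zdep : exists c : 'I_n -> R, (exists i, c i != 0) /\
        forall x : X, \sum_(i < n) c i * ((v i x)%:R : R) = 0) :
  exists D : 'I_n -> int,
    (exists i, D i != 0) /\
    (forall i, `|D i| <= amax n.-1) /\
    (forall x : X, \sum_(i < n) D i * ((v i x)%:R : int) = 0).
Proof.
case: Zdep => c [[i0 ci0] hc].
pose T := {ffun 'I_n -> bool}.
pose rl (b : T) : bool := `[< exists x, forall i, v i x = b i >].
pose A : 'M[int]_(#|T|, n) :=
  \matrix_(k, i) if rl (enum_val k) then (((enum_val k) i)%:R : int) else 0.
pose cc : 'cV[R]_n := \col_i c i.
have H01 : forall p i, A p i = 0 \/ A p i = 1.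
  by move=> p i; rewrite mxE; case: (rl _); [case: (enum_val p i); [right|left]|left].
have cnz : cc != 0.
  apply/negP => /eqP e; move: ci0; have := congr1 (fun X : 'cV[R]_n => X i0 0) e.
  by rewrite !mxE => ->; rewrite eqxx.
have Ac : map_mx intr A *m cc = 0.
  apply/matrixP => k z; rewrite !mxE.
  case: (asboolP (exists x, forall i, v i x = enum_val k i)) => [[x hx]|hn].
    rewrite -[RHS](hc x); apply: eq_bigr => i _; rewrite !mxE.
    have -> : rl (enum_val k) by apply/asboolP; exists x.
    by rewrite -hx mulrC; case: (v i x).
  rewrite big1 // => i _; rewrite !mxE.
  have -> : rl (enum_val k) = false by apply/negbTE/negP => /asboolP.
  by rewrite mul0r.
have [D [Dnz [Db DK]]] := core H01 cnz Ac.
exists D; split => //; split => // x.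
pose b : T := [ffun i => v i x].
have := DK (enum_rank b); rewrite /A; move=> e; rewrite -{}[RHS]e.
apply: eq_bigr => i _; rewrite mxE enum_rankK.
have -> : rl b by apply/asboolP; exists x => i'; rewrite ffunE.
by rewrite ffunE mulrC.
Qed.
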